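(* Let $n,r$ be positive integers, let $C\in\mathbb{R}^{n\times n}$ be symmetric, and let $\rho\ge\max\{10\|C\|_{\infty},\,2\|C\|\}$. Let $(\tilde\sigma^k,\sigma^k,y^k)_{k\ge 0}$ be generated by the ADMM-BM algorithm described in the context, and suppose Assumption A holds (i.e. $\gamma_i^k\neq 0$ for every $i\in[n]$ and every iteration $k$). Then the sequence $L_\rho(\tilde\sigma^k,\sigma^k,y^k)$, $k\ge 1$, converges, and $L_\rho(\tilde\sigma^k,\sigma^k,y^k)-\langle C\tilde\sigma^k,\tilde\sigma^k\rangle\to 0$ as $k\to\infty$. Moreover, the sequence $(\tilde\sigma^k)$ has at least one convergent subsequence, and the limit of every convergent subsequence of $(\tilde\sigma^k)$ belongs to the set $\Omega$ of first-order stationary points of the problem $\min\{\langle C,\sigma\sigma^\top\rangle:\sigma\in\mathcal{M}\}$.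
   Context: For $A,B$ of equal size, $\langle A,B\rangle=\mathrm{Tr}(A^\top B)$ and $\|A\|_F=\sqrt{\langle A,A\rangle}$. $\|C\|$ is the spectral (operator 2-) norm and $\|C\|_\infty=\max_i\sum_j|C_{ij}|$. For $\sigma\in\mathbb{R}^{n\times r}$, $\sigma_i\in\mathbb{R}^r$ denotes the (transpose of the) $i$-th row, and $(C\sigma)_{i,\cdot}$ the $i$-th row of $C\sigma$. Let $\mathcal{M}=\{\sigma\in\mathbb{R}^{n\times r}:\|\sigma_i\|=1\ \forall i\in[n]\}$. ADMM-BM algorithm with parameter $\rho>0$: choose $\tilde\sigma^0\in\mathcal{M}$, set $\sigma^0=\tilde\sigma^0$, $y^0=C\tilde\sigma^0$. For $k=0,1,2,\dots$: set $\gamma^k=\sigma^k-\frac1\rho(y^k+C\sigma^k)$ with rows $\gamma^k_i$; set $\tilde\sigma^{k+1}_i=\gamma_i^k/\|\gamma_i^k\|$ for each $i\in[n]$; set $\sigma^{k+1}=\tilde\sigma^{k+1}+\frac1\rho(y^k-C\tilde\sigma^{k+1})$; set $y^{k+1}=y^k+\rho(\tilde\sigma^{k+1}-\sigma^{k+1})$. Assumption A: $\|\gamma_i^k\|\neq0$ for all $i\in[n]$ and all $k$. Augmented Lagrangian: $L_\rho(\tilde\sigma,\sigma,y)=\langle C,\tilde\sigma\sigma^\top\rangle+\langle y,\tilde\sigma-\sigma\rangle+\frac\rho2\|\tilde\sigma-\sigma\|_F^2+\sum_{i=1}^n\mathcal{I}_{\{\|u\|=1\}}(\tilde\sigma_i)$,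 where $\mathcal{I}_S$ is the indicator function of $S$ (0 on $S$, $+\infty$ outside). A first-order stationary point is a $\tilde\sigma^*\in\mathcal{M}$ such that $-(C\tilde\sigma^* )_{i,\cdot}^\top\in\partial\mathcal{I}_{\{\|u\|=1\}}(\tilde\sigma^*_i)$ for all $i\in[n]$, where $\partial$ is the limiting subdifferential (for the unit sphere at a point $u$ this is $\{tu:t\in\mathbb{R}\}$). *)

(* Defs.v *)
From HB Require Import structures.
From mathcomp Require Import all_boot all_order all_algebra.
From mathcomp Require Import all_classical all_reals all_analysis.
Set Implicit Arguments. Unset Strict Implicit. Unset Printing Implicit Defensive.
Import Order.TTheory GRing.Theory Num.Theory.
Import numFieldNormedType.Exports.
Local Open Scope ring_scope.
Local Open Scope classical_set_scope.

Section Defs.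
Variable R : realType.

Definition frob {m p : nat} (A B : 'M[R]_(m, p)) : R := \tr (A^T *m B).

Definition rnorm {p : nat} (v : 'rV[R]_p) : R := Num.sqrt (\sum_j (v 0 j) ^+ 2).
Definition cnorm {p : nat} (v : 'cV[R]_p) : R := Num.sqrt (\sum_i (v i 0) ^+ 2).

Definition spec_norm {n : nat} (C : 'M[R]_n) : R :=
  sup [set cnorm (C *m x) | x in [set x : 'cV[R]_n | cnorm x = 1]].

Definition inf_norm {n : nat} (C : 'M[R]_n) : R :=
  \big[Num.max/0]_(i < n) \sum_(j < n) `|C i j|.

Definition oblique {n r : nat} (s : 'M[R]_(n, r)) : Prop :=
  forall i : 'I_n, rnorm (row i s) = 1.

Definition sphere_ind {r : nat} (u : 'rV[R]_r) : \bar R :=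
  if rnorm u == 1 then 0%E else +oo%E.

Definition Lrho {n r : nat} (C : 'M[R]_n) (rho : R)
    (ts s y : 'M[R]_(n, r)) : \bar R :=
  ((frob C (ts *m s^T) + frob y (ts - s) + rho / 2 * frob (ts - s) (ts - s))%:E
   + \sum_(i < n) sphere_ind (row i ts))%E.

Definition sphere_subdiff {r : nat} (u : 'rV[R]_r) : set 'rV[R]_r :=
  [set v | exists t : R, v = t *: u].

Definition stationary {n r : nat} (C : 'M[R]_n) (ts : 'M[R]_(n, r)) : Prop :=
  oblique ts /\
  forall i : 'I_n, sphere_subdiff (row i ts) (- row i (C *m ts)).

Definition gammaBM {n r : nat} (C : 'M[R]_n) (rho : R)
    (s y : 'M[R]_(n, r)) : 'M[R]_(n, r) :=
  s - rho^-1 *: (y + C *m s).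

Definition admm_bm {n r : nat} (C : 'M[R]_n) (rho : R)
    (ts s y : nat -> 'M[R]_(n, r)) : Prop :=
  [/\ oblique (ts 0%N), s 0%N = ts 0%N, y 0%N = C *m ts 0%N &
   forall k : nat,
     [/\ ts k.+1 = \matrix_(i, j)
            (gammaBM C rho (s k) (y k) i j / rnorm (row i (gammaBM C rho (s k) (y k)))),
         s k.+1 = ts k.+1 + rho^-1 *: (y k - C *m ts k.+1) &
         y k.+1 = y k + rho *: (ts k.+1 - s k.+1)]].

Definition assumptionA {n r : nat} (C : 'M[R]_n) (rho : R)
    (s y : nat -> 'M[R]_(n, r)) : Prop :=
  forall (k : nat) (i : 'I_n), rnorm (row i (gammaBM C rho (s k) (y k))) != 0.

End Defs.

(* Main.v *)
Require Import Defs.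
From HB Require Import structures.
From mathcomp Require Import all_boot all_order all_algebra.
From mathcomp Require Import all_classical all_reals all_analysis.
From mathcomp Require Import ring lra.
Import Order.TTheory GRing.Theory Num.Theory.
Import numFieldNormedType.Exports.
Set Implicit Arguments. Unset Strict Implicit. Unset Printing Implicit Defensive.
Local Open Scope ring_scope.
Local Open Scope classical_set_scope.
Section Frob.
Variable R : realType.
Variables m p : nat.
Implicit Types A B D : 'M[R]_(m, p).

Lemma frobE A B : frob A B = \sum_i \sum_j A i j * B i j.
Proof.
rewrite /frob /mxtrace exchange_big /=; apply: eq_bigr => j _.
rewrite !mxE; apply: eq_bigr => i _; by rewrite !mxE.
Qed.

Lemma frobC A B : frob A B = frob B A.
Proof. rewrite !frobE; apply: eq_bigr => i _; apply: eq_bigr => j _; exact: mulrC. Qed.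

Lemma frobDl A B D : frob (A + B) D = frob A D + frob B D.
Proof.
rewrite !frobE -big_split; apply: eq_bigr => i _.
rewrite -big_split; apply: eq_bigr => j _; by rewrite mxE mulrDl.
Qed.

Lemma frobDr A B D : frob D (A + B) = frob D A + frob D B.
Proof. by rewrite frobC frobDl !(frobC D). Qed.

Lemma frobZl (a : R) A B : frob (a *: A) B = a * frob A B.
Proof.
rewrite !frobE mulr_sumr; apply: eq_bigr => i _.
rewrite mulr_sumr; apply: eq_bigr => j _; by rewrite mxE mulrA.
Qed.

Lemma frobZr (a : R) A B : frob A (a *: B) = a * frob A B.
Proof. by rewrite frobC frobZl frobC. Qed.

Lemma frobNl A B : frob (- A) B = - frob A B.
Proof. by rewrite -scaleN1r frobZl mulN1r. Qed.

Lemma frobNr A B : frob A (- B) = - frob A B.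
Proof. by rewrite -scaleN1r frobZr mulN1r. Qed.

Lemma frobBl A B D : frob (A - B) D = frob A D - frob B D.
Proof. by rewrite frobDl frobNl. Qed.

Lemma frobBr A B D : frob D (A - B) = frob D A - frob D B.
Proof. by rewrite frobDr frobNr. Qed.

Lemma frob_ge0 A : 0 <= frob A A.
Proof. rewrite frobE; apply: sumr_ge0 => i _; apply: sumr_ge0 => j _; exact: sqr_ge0. Qed.

Lemma young_frob (t : R) A B : 0 < t ->
  2 * frob A B <= t * frob A A + t^-1 * frob B B.
Proof.
move=> t0; rewrite !frobE !mulr_sumr -big_split /=; apply: ler_sum => i _.
rewrite !mulr_sumr -big_split /=; apply: ler_sum => j _.
have h : 0 <= t^-1 * (t * A i j - B i j)^+2 by apply: mulr_ge0; [rewrite invr_ge0 ltW | rewrite sqr_ge0].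
have e : t^-1 * (t * A i j - B i j)^+2 = t * (A i j * A i j) + t^-1 * (B i j * B i j) - 2 * (A i j * B i j).
  by field; exact: lt0r_neq0.
lra.
Qed.

Lemma mulmx_frob_sym (C : 'M[R]_m) A B : C^T = C ->
  frob (C *m A) B = frob A (C *m B).
Proof.
move=> CT; rewrite /frob trmx_mul CT -mulmxA //.
Qed.

Lemma entry_le_frob A i j : (A i j)^+2 <= frob A A.
Proof.
rewrite frobE (bigD1 i) //= (bigD1 j) //= -expr2 -addrA lerDl.
apply: addr_ge0; first by apply: sumr_ge0 => k _; rewrite -expr2 sqr_ge0.
apply: sumr_ge0 => k _; apply: sumr_ge0 => l _; by rewrite -expr2 sqr_ge0.
Qed.

Lemma frob0l B : frob 0 B = 0.
Proof. by rewrite frobE big1 // => i _; rewrite big1 // => j _; rewrite mxE mul0r. Qed.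

End Frob.
Section CS.
Variable R : realType.

Lemma wcs_term (aj al xj xl : R) :
  2 * (aj * xj * (al * xl)) <= `|aj| * xj ^+ 2 * `|al| + `|aj| * (`|al| * xl ^+ 2).
Proof.
have A0 : 0 <= `|aj| * `|al| by rewrite mulr_ge0.
have e : `|aj| * xj ^+ 2 * `|al| + `|aj| * (`|al| * xl ^+ 2) =
   (`|aj| * `|al|) * (xj ^+2 + xl ^+ 2) by ring.
rewrite e.
have [P0|P0] := lerP 0 (aj * al).
  have PA : aj * al = `|aj| * `|al| by rewrite -normrM ger0_norm.
  have : 0 <= (aj * al) * (xj - xl) ^+ 2 by rewrite mulr_ge0 ?sqr_ge0.
  rewrite PA; move=> h.
  have e2 : 2 * (aj * xj * (al * xl)) = 2 * (aj * al) * (xj * xl) by ring.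
  rewrite e2 PA; nra.
have PA : aj * al = - (`|aj| * `|al|) by rewrite -normrM ltr0_norm ?opprK.
have : 0 <= (`|aj| * `|al|) * (xj + xl) ^+ 2 by rewrite mulr_ge0 ?sqr_ge0.
move=> h.
have e2 : 2 * (aj * xj * (al * xl)) = 2 * (aj * al) * (xj * xl) by ring.
rewrite e2 PA; nra.
Qed.

Lemma wcs (k : nat) (a x : 'I_k -> R) :
  (\sum_j a j * x j) ^+ 2 <= (\sum_j `|a j|) * (\sum_j `|a j| * x j ^+ 2).
Proof.
have e1 : (\sum_j a j * x j) ^+ 2 = \sum_j \sum_l (a j * x j) * (a l * x l).
  by rewrite expr2 mulr_suml; apply: eq_bigr => j _; rewrite mulr_sumr.
have e2 : (\sum_j `|a j|) * (\sum_j `|a j| * x j ^+ 2) =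
          \sum_j \sum_l (`|a j| * x j ^+ 2) * `|a l|.
  rewrite mulrC mulr_suml; apply: eq_bigr => j _; by rewrite mulr_sumr.
have e3 : (\sum_j `|a j|) * (\sum_j `|a j| * x j ^+ 2) =
          \sum_j \sum_l `|a j| * (`|a l| * x l ^+ 2).
  rewrite mulr_suml; apply: eq_bigr => j _; by rewrite mulr_sumr.
have h : 2 * (\sum_j a j * x j) ^+ 2 <= \sum_j \sum_l (`|a j| * x j ^+ 2) * `|a l|
   + \sum_j \sum_l `|a j| * (`|a l| * x l ^+ 2).
  rewrite e1 mulr_sumr -big_split /=.
  apply: ler_sum => j _; rewrite mulr_sumr -big_split /=; apply: ler_sum => l _.
  exact: wcs_term.
lra.
Qed.

End CS.
Section Cbounds.
Variable R : realType.
Variable n : nat.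
Variable C : 'M[R]_n.
Local Notation c := (inf_norm C).

Lemma inf_norm_ge0 : 0 <= c.
Proof.
rewrite /inf_norm; elim/big_ind: _ => //.
  by move=> x y x0 y0; rewrite le_max x0.
by move=> i _; apply: sumr_ge0.
Qed.

Lemma rowsum_le i : \sum_j `|C i j| <= c.
Proof. exact: (le_bigmax 0 (fun i => \sum_j `|C i j|) i). Qed.

Lemma rowsum_ge0 i : 0 <= \sum_j `|C i j|.
Proof. by apply: sumr_ge0 => j _. Qed.

Lemma rowC_bound p (X : 'M[R]_(n, p)) (M : R) : 0 <= M ->
  (forall j, \sum_l (X j l) ^+ 2 <= M) ->
  forall i, \sum_l ((C *m X) i l) ^+ 2 <= c ^+ 2 * M.
Proof.
move=> M0 hX i.
apply: (@le_trans _ _ (\sum_l (\sum_j `|C i j|) * (\sum_j `|C i j| * (X j l) ^+ 2))).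
  apply: ler_sum => l _; rewrite mxE; exact: (@wcs _ _ (fun j => C i j) (fun j => X j l)).
rewrite -mulr_sumr.
apply: (@le_trans _ _ ((\sum_j `|C i j|) * ((\sum_j `|C i j|) * M))).
  apply: ler_wpM2l; first exact: rowsum_ge0.
  rewrite exchange_big /= mulr_suml; apply: ler_sum => j _.
  rewrite -mulr_sumr; apply: ler_wpM2l => //.
rewrite mulrA -expr2; apply: ler_wpM2r => //.
apply: lerXn2r; rewrite ?nnegrE ?rowsum_ge0 ?inf_norm_ge0 //; exact: rowsum_le.
Qed.

Lemma frobC_bound p (X : 'M[R]_(n, p)) : C^T = C ->
  frob (C *m X) (C *m X) <= c ^+ 2 * frob X X.
Proof.
move=> CT; rewrite !frobE.
apply: (@le_trans _ _ (\sum_i \sum_l (\sum_j `|C i j|) * (\sum_j `|C i j| * (X j l) ^+ 2))).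
  apply: ler_sum => i _; apply: ler_sum => l _; rewrite -expr2 mxE.
  exact: (@wcs _ _ (fun j => C i j) (fun j => X j l)).
apply: (@le_trans _ _ (\sum_i \sum_l c * (\sum_j `|C i j| * (X j l) ^+ 2))).
  apply: ler_sum => i _; apply: ler_sum => l _; apply: ler_wpM2r; last exact: rowsum_le.
  by apply: sumr_ge0 => j _; rewrite mulr_ge0 ?sqr_ge0.
rewrite (eq_bigr (fun i => c * \sum_l \sum_j `|C i j| * X j l ^+ 2)); last first.
  by move=> i _; rewrite mulr_sumr.
rewrite -mulr_sumr.
have e : \sum_i \sum_l \sum_j `|C i j| * X j l ^+ 2 =
         \sum_j (\sum_i `|C j i|) * (\sum_l X j l ^+ 2).
  transitivity (\sum_i \sum_j \sum_l `|C i j| * X j l ^+ 2).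
    by apply: eq_bigr => i _; rewrite exchange_big.
  rewrite exchange_big /=; apply: eq_bigr => j _.
  rewrite mulr_suml; apply: eq_bigr => i _.
  rewrite mulr_sumr; apply: eq_bigr => l _.
  by rewrite -[in LHS]CT mxE.
rewrite e expr2 -mulrA; apply: ler_wpM2l; first exact: inf_norm_ge0.
rewrite mulr_sumr; apply: ler_sum => j _.
rewrite (eq_bigr (fun l => X j l ^+ 2)); last by move=> l _; rewrite expr2.
apply: ler_wpM2r; first by apply: sumr_ge0 => l _; rewrite sqr_ge0.
exact: rowsum_le.
Qed.

End Cbounds.
Section Rows.
Variable R : realType.
Variables m p : nat.
Implicit Types A B : 'M[R]_(m, p).

Definition ip A B i := \sum_j A i j * B i j.
Definition rs A i := ip A A i.

Lemma ip_young (t : R) A B i : 0 < t -> 2 * ip A B i <= t * rs A i + t^-1 * rs B i.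
Proof.
move=> t0; rewrite /rs /ip !mulr_sumr -big_split /=; apply: ler_sum => j _.
have h : 0 <= t^-1 * (t * A i j - B i j)^+2.
  by apply: mulr_ge0; [rewrite invr_ge0 ltW | rewrite sqr_ge0].
have e : t^-1 * (t * A i j - B i j)^+2 = t * (A i j * A i j) + t^-1 * (B i j * B i j) - 2 * (A i j * B i j).
  by field; exact: lt0r_neq0.
lra.
Qed.

Lemma ipC A B i : ip A B i = ip B A i.
Proof. by apply: eq_bigr => j _; rewrite mulrC. Qed.

Lemma ipDl A B D i : ip (A + B) D i = ip A D i + ip B D i.
Proof. by rewrite /ip -big_split; apply: eq_bigr => j _; rewrite mxE mulrDl. Qed.

Lemma ipDr A B D i : ip D (A + B) i = ip D A i + ip D B i.
Proof. by rewrite ipC ipDl !(ipC D). Qed.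

Lemma ipZl a A B i : ip (a *: A) B i = a * ip A B i.
Proof. by rewrite /ip mulr_sumr; apply: eq_bigr => j _; rewrite mxE mulrA. Qed.

Lemma ipNl A B i : ip (- A) B i = - ip A B i.
Proof. by rewrite -scaleN1r ipZl mulN1r. Qed.

Lemma ipNr A B i : ip A (- B) i = - ip A B i.
Proof. by rewrite ipC ipNl ipC. Qed.

Lemma ipBr A B D i : ip D (A - B) i = ip D A i - ip D B i.
Proof. by rewrite ipDr ipNr. Qed.

Lemma rs0 i : rs (0 : 'M[R]_(m, p)) i = 0.
Proof. by rewrite /rs /ip big1 // => j _; rewrite mxE mul0r. Qed.

Lemma rs_ge0 A i : 0 <= rs A i.
Proof. by apply: sumr_ge0 => j _; rewrite -expr2 sqr_ge0. Qed.

Lemma rsD A B i : rs (A + B) i = rs A i + 2 * ip A B i + rs B i.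
Proof. rewrite /rs ipDl !ipDr (ipC B A); ring. Qed.

Lemma rsZ a A i : rs (a *: A) i = a ^+ 2 * rs A i.
Proof. by rewrite /rs ipZl (ipC A) ipZl mulrA -expr2. Qed.

Lemma rsN A i : rs (- A) i = rs A i.
Proof. by rewrite -scaleN1r rsZ sqrrN expr1n mul1r. Qed.

Lemma rsD_le (t : R) A B i : 0 < t -> rs (A + B) i <= (1 + t) * rs A i + (1 + t^-1) * rs B i.
Proof. move=> t0; have := ip_young A B i t0; rewrite rsD; lra. Qed.

Lemma rsD_ge (t : R) A B i : 0 < t -> (1 - t) * rs A i + (1 - t^-1) * rs B i <= rs (A + B) i.
Proof.
move=> t0; have := ip_young A (- B) i t0; rewrite rsD ipC ipNl ipC rsN; lra.
Qed.

Lemma entry_le_rs A i j : (A i j)^+2 <= rs A i.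
Proof.
rewrite /rs /ip (bigD1 j) //= -expr2 lerDl.
by apply: sumr_ge0 => k _; rewrite -expr2 sqr_ge0.
Qed.

Lemma rs_sum A i : rs A i = \sum_j (A i j) ^+ 2.
Proof. by apply: eq_bigr => j _; rewrite expr2. Qed.

Lemma frob_rs A : frob A A = \sum_i rs A i.
Proof. by rewrite frobE. Qed.

Lemma frob_ip A B : frob A B = \sum_i ip A B i.
Proof. by rewrite frobE. Qed.

End Rows.
Section Anal.

Lemma homo_ge (phi : nat -> nat) : {homo phi : a b / (a < b)%N >-> (a < b)%N} ->
  forall k, (k <= phi k)%N.
Proof.
move=> hp; elim=> [|k IH] //.
by apply: leq_ltn_trans IH (hp _ _ (ltnSn k)).
Qed.

Lemma subseq_cvg {T : topologicalType} (u : nat -> T) (l : T) (phi : nat -> nat) :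
  {homo phi : a b / (a < b)%N >-> (a < b)%N} ->
  u @ \oo --> l -> (u \o phi) @ \oo --> l.
Proof.
move=> hp hu; apply: cvg_comp hu.
apply/cvgnyPge => A; near=> x.
apply: leq_trans (homo_ge hp x); near: x; exact: nbhs_infty_ge.
Unshelve. all: by end_near.
Qed.

Lemma cvg_sumR {R : realType} (p : nat) (f : 'I_p -> nat -> R) (a : 'I_p -> R) :
  (forall j, f j @ \oo --> a j) ->
  (fun k => \sum_j f j k) @ \oo --> \sum_j a j.
Proof.
move=> hf; rewrite unlock /=.
elim: (index_enum _) => [|j e IH] /=; first exact: cvg_cst.
exact: cvgD (hf j) IH.
Qed.

Lemma entry_cvg {R : realType} m p (X : nat -> 'M[R]_(m, p)) (L : 'M[R]_(m, p)) i j :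
  X @ \oo --> L -> (fun k => X k i j) @ \oo --> L i j.
Proof.
move=> hX; have hc := @coord_continuous R m p i j L.
exact: (continuous_cvg _ hc hX).
Qed.

Lemma mx_cvg {R : realType} m p (X : nat -> 'M[R]_(m, p)) (L : 'M[R]_(m, p)) :
  (forall i j, (fun k => X k i j) @ \oo --> L i j) -> X @ \oo --> L.
Proof.
move=> h; apply/cvg_mx_entourageP => A entA.
have FF : Filter (X @ \oo) by apply: fmap_filter.
apply: (filter_forall (f := fun i (N : 'M[R]_(m, p)) => forall j, (L i j, N i j) \in A) FF) => i.
apply: (filter_forall (f := fun j (N : 'M[R]_(m, p)) => (L i j, N i j) \in A) FF) => j.
have hk : \forall k \near \oo, A (L i j, X k i j).
  by move/cvg_entourageP: (h i j) => /(_ A entA).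
change (\forall k \near \oo, (L i j, X k i j) \in A).
by move: hk; apply: filterS => k hk; rewrite inE.
Qed.

Lemma cst_lim {R : realType} (a b : R) : (fun _ : nat => a) @ \oo --> b -> a = b.
Proof. move=> h; apply: (@cvg_unique _ (@Rhausdorff R) ((fun _ : nat => a) @ \oo) _); [exact: cvg_cst | exact: h]. Qed.

Lemma lim_eq {R : realType} (u v : nat -> R) (a b : R) : (forall k, u k = v k) ->
  u @ \oo --> a -> v @ \oo --> b -> a = b.
Proof.
move=> e hu hv; have : u = v by apply/funext.
by move=> uv; rewrite uv in hu; apply: (@cvg_unique _ (@Rhausdorff R) (v @ \oo) _); [exact: hu | exact: hv].
Qed.

Lemma sq_cvg0 {R : realType} (u w : nat -> R) : (forall k, u k ^+ 2 <= w k) ->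
  w @ \oo --> 0 -> u @ \oo --> 0.
Proof.
move=> hw h; apply/cvgrPdist_lt => e e0.
move/cvgrPdist_lt: h => /(_ (e ^+ 2)); rewrite exprn_gt0 // => /(_ isT).
apply: filterS => k; rewrite sub0r normrN sub0r normrN => hk.
have := le_lt_trans (le_trans (hw k) (ler_norm _)) hk.
move=> h; have hn := normr_ge0 (u k); have hsq : `|u k| ^+ 2 = u k ^+ 2 := real_normK (num_real _).
rewrite -hsq in h; nra.
Qed.

Lemma EFin_cvg {R : realType} (u : nat -> R) (a : R) :
  u @ \oo --> a -> (fun k => (u k)%:E) @ \oo --> a%:E.
Proof.
move=> h; apply/fine_cvgP; split; first by near=> k.
by have -> : fine \o (fun k => (u k)%:E) = u by apply/funext.
Unshelve. all: by end_near.
Qed.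

End Anal.
Section BW.
Variable R : realType.

Lemma bounded_of {T : Type} (f : T -> R) (M : R) : (forall x, `|f x| <= M) -> bounded_fun f.
Proof.
move=> hM; rewrite /= /bounded_near; near=> N => x _ /=.
apply: le_trans (hM x) _; near: N; apply: nbhs_pinfty_ge; exact: num_real.
Unshelve. all: by end_near.
Qed.

Lemma homo_of_incr (f : nat -> nat) : increasing_seq f -> {homo f : a b / (a < b)%N >-> (a < b)%N}.
Proof. move=> hf a b ab; rewrite ltnNge; have := hf b a; rewrite !leEnat => ->; by rewrite -ltnNge. Qed.

Lemma mx_bw m p (X : nat -> 'M[R]_(m, p)) (M : R) : (forall k i j, `|X k i j| <= M) ->
  exists phi : nat -> nat, {homo phi : a b / (a < b)%N >-> (a < b)%N} /\ cvg ((X \o phi) @ \oo).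
Proof.
move=> hM.
have step : forall l : seq ('I_m * 'I_p), exists phi : nat -> nat,
    {homo phi : a b / (a < b)%N >-> (a < b)%N} /\
    forall ij, ij \in l -> cvgn (fun k => X (phi k) ij.1 ij.2).
  elim=> [|ij l [phi [hphi IH]]]; first by exists id; split => // ij; rewrite in_nil.
  have [psi hpsi cpsi] := bolzano_weierstrass (bounded_of (fun k => hM (phi k) ij.1 ij.2)).
  exists (phi \o psi); split.
    by move=> a b ab /=; apply: hphi; apply: (homo_of_incr hpsi).
  move=> ij'; rewrite in_cons => /orP[/eqP ->|hin]; first exact: cpsi.
  have hl0 := IH ij' hin.
  exact: (cvgP _ (subseq_cvg (u := fun k => X (phi k) ij'.1 ij'.2) (homo_of_incr hpsi) hl0)).
have [phi [hphi hc]] := step (enum [set: 'I_m * 'I_p]).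
exists phi; split => //.
apply: (cvgP (\matrix_(i, j) lim ((fun k => X (phi k) i j) @ \oo))).
apply: mx_cvg => i j; rewrite mxE.
have := hc (i, j); rewrite mem_enum in_setT => /(_ isT) /=.
done.
Qed.

End BW.
Section Main.
Variables (R : realType) (n r : nat) (C : 'M[R]_n) (rho : R).
Variables (ts s y : nat -> 'M[R]_(n, r)).
Hypothesis CT : C^T = C.
Hypothesis hrho : Num.max (10 * inf_norm C) (2 * spec_norm C) <= rho.
Hypothesis H : admm_bm C rho ts s y.
Hypothesis HA : assumptionA C rho s y.

Local Notation c := (inf_norm C).

Lemma rho_c : 10 * c <= rho.
Proof. by move: hrho; rewrite ge_max => /andP[]. Qed.

Lemma rho_ge0 : 0 <= rho.
Proof. have := rho_c; have := inf_norm_ge0 C; lra. Qed.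

Lemma C0_of_c0 : c = 0 -> C = 0.
Proof.
move=> c0; apply/matrixP => i j; rewrite mxE; apply/eqP; rewrite -normr_eq0.
rewrite eq_le normr_ge0 andbT -c0.
apply: le_trans (rowsum_le C i).
rewrite (bigD1 j) //= lerDl; exact: sumr_ge0.
Qed.

Lemma rho_cases : 0 < rho \/ C = 0.
Proof.
have := rho_ge0; rewrite le_eqVlt => /orP[/eqP r0|]; last by left.
right; apply: C0_of_c0; have := rho_c; have := inf_norm_ge0 C; rewrite -r0; lra.
Qed.

Lemma rnorm_rs (A : 'M[R]_(n, r)) i : rnorm (row i A) = Num.sqrt (rs A i).
Proof. by rewrite /rnorm rs_sum; congr Num.sqrt; apply: eq_bigr => j _; rewrite mxE. Qed.

Lemma oblique_rs (A : 'M[R]_(n, r)) : oblique A <-> forall i, rs A i = 1.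
Proof.
split=> h i; last by rewrite rnorm_rs h sqrtr1.
have := h i; rewrite rnorm_rs => e.
by rewrite -[LHS]sqr_sqrtr ?rs_ge0 // e expr1n.
Qed.

Definition G k := gammaBM C rho (s k) (y k).
Definition N k i := rnorm (row i (G k)).

Lemma N_pos k i : 0 < N k i.
Proof. rewrite lt_neqAle eq_sym HA /N rnorm_rs sqrtr_ge0 //. Qed.

Lemma ts_succ k i j : ts k.+1 i j = G k i j / N k i.
Proof. by case: H => _ _ _ /(_ k) [-> _ _]; rewrite mxE. Qed.

Lemma G_ts k i j : G k i j = N k i * ts k.+1 i j.
Proof. rewrite ts_succ mulrC -mulrA mulVf ?mulr1 //; exact: lt0r_neq0 (N_pos k i). Qed.

Lemma rsG k i : rs (G k) i = N k i ^+ 2.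
Proof. by rewrite /N rnorm_rs sqr_sqrtr // rs_ge0. Qed.

Lemma ts_obl k : oblique (ts k).
Proof.
case: k => [|k]; first by case: H.
apply/oblique_rs => i.
have e : rs (ts k.+1) i = (N k i)^-2 * rs (G k) i.
  rewrite /rs /ip mulr_sumr; apply: eq_bigr => j _; rewrite !ts_succ; field.
  exact: lt0r_neq0 (N_pos k i).
by rewrite e rsG mulVf // expf_neq0 // lt0r_neq0 // N_pos.
Qed.

Lemma rs_ts k i : rs (ts k) i = 1.
Proof. exact: (proj1 (oblique_rs _) (ts_obl k)). Qed.

Lemma y_eq k : y k = C *m ts k.
Proof.
elim: k => [|k IH]; first by case: H.
case: H => _ _ _ /(_ k) [_ -> ->].
case: rho_cases => [rp|C0].
2:{ have Cz (X : 'M[R]_(n, r)) : C *m X = 0.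
      by apply/matrixP => i j; rewrite C0 !mxE big1 // => l _; rewrite mxE mul0r.
    by rewrite IH !Cz subrr scaler0 addr0 subrr scaler0 addr0. }
rewrite opprD addrA subrr add0r scalerN scalerA mulfV ?lt0r_neq0 // scale1r IH.
by rewrite opprB addrC subrK.
Qed.


Definition E k := s k - ts k.

Lemma s_eq k : s k = ts k + E k.
Proof. by rewrite /E addrC subrK. Qed.

Lemma E0 : E 0 = 0.
Proof. by rewrite /E; case: H => _ -> _ _; rewrite subrr. Qed.

Lemma E_succ k : E k.+1 = rho^-1 *: (C *m (ts k - ts k.+1)).
Proof.
rewrite /E; case: H => _ _ _ /(_ k) [_ -> _].
by rewrite addrC addKr y_eq mulmxBr.
Qed.

Lemma G_eq k : G k = ts k + (E k - rho^-1 *: (C *m (ts k + (ts k + E k)))).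
Proof.
rewrite /G /gammaBM y_eq s_eq.
rewrite [C *m (ts k + (ts k + E k))]mulmxDr.
by apply/matrixP => i j; rewrite !mxE; ring.
Qed.

Definition Lr k := frob C (ts k *m (s k)^T) + frob (y k) (ts k - s k)
   + rho / 2 * frob (ts k - s k) (ts k - s k).

Lemma Lrho_eq k : Lrho C rho (ts k) (s k) (y k) = (Lr k)%:E.
Proof.
rewrite /Lrho big1 ?adde0 // => i _.
by rewrite /sphere_ind (ts_obl k i) eqxx.
Qed.

Lemma frob_C_mul (A B : 'M[R]_(n, r)) : frob C (A *m B^T) = frob (C *m B) A.
Proof.
rewrite /frob mulmxA mxtrace_mulC trmx_mul CT.
by rewrite mulmxA.
Qed.

Lemma Lr_eq k : Lr k = frob (C *m ts k) (ts k) + rho / 2 * frob (E k) (E k).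
Proof.
rewrite /Lr frob_C_mul y_eq.
have -> : ts k - s k = - E k by rewrite /E opprB.
rewrite s_eq mulmxDr frobDl (mulmx_frob_sym (E k) (ts k) CT) (frobC (E k)).
rewrite frobNr frobNl frobNr opprK; ring.
Qed.

Section Pos.
Hypothesis rp : 0 < rho.

Lemma kappa : rho^-1 ^+ 2 * c ^+ 2 <= 1/100.
Proof.
have c0 := inf_norm_ge0 C; have hc := rho_c.
rewrite -exprMn; set x := rho^-1 * c.
have ec : c = rho * x by rewrite /x mulrA mulfV ?mul1r // lt0r_neq0.
have x0 : 0 <= x by rewrite /x mulr_ge0 // invr_ge0 ltW.
rewrite ec in hc.
have h1 : 0 <= rho * (1 - 10 * x) by lra.
rewrite pmulr_rge0 // in h1.
have : x <= 1/10 by lra.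
move=> h; nra.
Qed.

Lemma rsE_bound k j : rs (E k) j <= 1/25.
Proof.
case: k => [|k]; first by rewrite E0 rs0.
rewrite E_succ rsZ.
have hX : forall l, \sum_i ((ts k - ts k.+1) l i) ^+ 2 <= 4.
  move=> l; rewrite -rs_sum.
  have := rsD_le (ts k) (- ts k.+1) l ltr01; rewrite rsN !rs_ts invr1; lra.
have h4 : (0:R) <= 4 by lra.
have := rowC_bound C h4 hX j; rewrite -rs_sum => h.
have := kappa; have := rs_ge0 (C *m (ts k - ts k.+1)) j.
have : 0 <= rho^-1 ^+ 2 by rewrite sqr_ge0.
move=> h1 h2 h3; nra.
Qed.

Lemma G_eq2 k : G k = ts k + (E k - rho^-1 *: (C *m (2%:R *: ts k + E k))).
Proof.
rewrite G_eq; congr (_ + (_ - _ *: _)).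
rewrite !mulmxDr -scalemxAr.
by apply/matrixP => i j; rewrite !mxE; ring.
Qed.

Lemma N_ge k i : 1/2 <= N k i.
Proof.
set Z := 2%:R *: ts k + E k.
have hZ : forall l, \sum_j (Z l j) ^+ 2 <= 121/25.
  move=> l; rewrite -rs_sum.
  have t0 : (0:R) < 1/10 by [].
  have := rsD_le (2%:R *: ts k) (E k) l t0; rewrite rsZ rs_ts.
  have := rsE_bound k l; move=> h1 h2.
  have e : (1/10 : R)^-1 = 10 by rewrite div1r invrK.
  rewrite e in h2; lra.
have h4 : (0:R) <= 121/25 by lra.
have := rowC_bound C h4 hZ i; rewrite -rs_sum => hCZ.
set V := rho^-1 *: (C *m Z).
have hV : rs V i <= 121/2500.
  rewrite /V rsZ; have := kappa; have := rs_ge0 (C *m Z) i.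
  have : 0 <= rho^-1 ^+ 2 by rewrite sqr_ge0.
  move=> h1 h2 h3; nra.
have hW : rs (E k - V) i <= 1768/10000.
  have := rsD_le (E k) (- V) i ltr01; rewrite rsN invr1.
  have := rsE_bound k i; lra.
have hG : 1/4 <= rs (G k) i.
  rewrite G_eq2 -/Z -/V.
  have t0 : (0:R) < 1/2 by [].
  have := rsD_ge (ts k) (E k - V) i t0; rewrite rs_ts.
  have e : (1/2 : R)^-1 = 2 by rewrite div1r invrK.
  rewrite e; lra.
rewrite rsG in hG; have := N_pos k i; nra.
Qed.

Definition D k := ts k.+1 - ts k.

Lemma ipTD k i : ip (ts k) (D k) i = - rs (D k) i / 2.
Proof.
have h := rs_ts k i; rewrite /rs in h.
rewrite /D ipBr rsD rsN ipNr !rs_ts (ipC (ts k)) h; lra.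
Qed.

Lemma ipGD k i : rs (D k) i / 4 <= ip (G k) (D k) i.
Proof.
have e1 : ip (G k) (D k) i = N k i * ip (ts k.+1) (D k) i.
  rewrite /ip mulr_sumr; apply: eq_bigr => j _; by rewrite G_ts mulrA.
have e2 : ip (ts k.+1) (D k) i = rs (D k) i / 2.
  have h := rs_ts k.+1 i; rewrite /rs in h.
  rewrite /D ipBr rsD rsN ipNr !rs_ts h; lra.
rewrite e1 e2; have := N_ge k i; have := rs_ge0 (D k) i; nra.
Qed.


Lemma c2_le : c ^+ 2 <= rho ^+ 2 / 100.
Proof. have := rho_c; have := inf_norm_ge0 C; move=> h1 h2; nra. Qed.

Lemma CX_bound (X : 'M[R]_(n, r)) : 10 / rho * frob (C *m X) (C *m X) <= rho / 10 * frob X X.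
Proof.
have h := frobC_bound X CT.
have e0 := frob_ge0 X.
have h2 : c ^+ 2 * frob X X <= rho ^+ 2 / 100 * frob X X by apply: ler_wpM2r => //; exact: c2_le.
have r0 : 0 <= 10 / rho by rewrite divr_ge0 // ltW.
apply: le_trans (ler_wpM2l r0 (le_trans h h2)) _.
rewrite le_eqVlt; apply/orP; left; apply/eqP; field; exact: lt0r_neq0.
Qed.

Lemma descent k : Lr k.+1 <= Lr k - rho / 30 * frob (D k) (D k).
Proof.
have rn0 : rho != 0 by exact: lt0r_neq0.
set T := ts k; set Dk := D k; set Ek := E k.
have eT' : ts k.+1 = T + Dk by rewrite /Dk /D addrC subrK.
have hL1 := Lr_eq k.+1.
have hL0 := Lr_eq k.
have hE' : rho / 2 * frob (E k.+1) (E k.+1) = 1/20 * (10 / rho * frob (C *m Dk) (C *m Dk)).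
  rewrite E_succ frobZl frobZr.
  have -> : T - ts k.+1 = - Dk by rewrite eT' opprD addrA subrr add0r.
  rewrite mulmxN frobNl frobNr opprK; field; exact: rn0.
have hCT' : frob (C *m ts k.+1) (ts k.+1) = frob (C *m T) T + 2 * frob (C *m T) Dk + frob (C *m Dk) Dk.
  rewrite eT' mulmxDr frobDl (frobDr T Dk (C *m T)) (frobDr T Dk (C *m Dk)).
  rewrite (mulmx_frob_sym Dk T CT) (frobC Dk (C *m T)); ring.
have hG : rho * frob (G k) Dk = rho * frob T Dk + rho * frob Ek Dk - 2 * frob (C *m T) Dk - frob (C *m Ek) Dk.
  rewrite G_eq frobDl frobBl frobZl !mulmxDr !frobDl; field; exact: rn0.
have hTD : frob T Dk = - frob Dk Dk / 2.
  rewrite (frob_ip T Dk) (eq_bigr (fun i => - rs Dk i / 2)); last by move=> i _; rewrite ipTD.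
  by rewrite frob_rs -mulr_suml sumrN.
have hGD : frob Dk Dk / 4 <= frob (G k) Dk.
  rewrite (frob_ip (G k) Dk) frob_rs mulr_suml; apply: ler_sum => i _; exact: ipGD.
have t1 : (0:R) < 9/10 by [].
have y1 := young_frob Ek Dk t1.
have t2 : 0 < 10 / rho by rewrite divr_gt0.
have y2 := young_frob (C *m Ek) (- Dk) t2.
have y3 := young_frob (C *m Dk) Dk t2.
have b1 := CX_bound Ek.
have b2 := CX_bound Dk.
rewrite frobNr frobNl frobNr opprK in y2.
have i1 : (9/10 : R)^-1 = 10/9 by rewrite invf_div.
have i2 : (10 / rho)^-1 = rho / 10 by rewrite invf_div.
rewrite i1 in y1; rewrite i2 in y2 y3.
have hGD' := ler_wpM2l (ltW rp) hGD.
have y1' := ler_wpM2l (ltW rp) y1.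
have d0 := frob_ge0 Dk.
rewrite hL1 hL0 hCT' hE' -/T -/Ek.
have e1 : rho * (frob Dk Dk / 4) = rho * frob Dk Dk / 4 by ring.
rewrite e1 in hGD'.
have e2 : rho * (9 / 10 * frob Ek Ek + 10 / 9 * frob Dk Dk) = 9/10 * (rho * frob Ek Ek) + 10/9 * (rho * frob Dk Dk) by ring.
rewrite e2 in y1'.
have e3 : rho * frob T Dk = - (rho * frob Dk Dk) / 2 by rewrite hTD; ring.
have e4 : rho * (2 * frob Ek Dk) = 2 * (rho * frob Ek Dk) by ring.
rewrite e4 in y1'.
have ad0 : 0 <= rho * frob Dk Dk by rewrite mulr_ge0 // ltW.
lra.
Qed.

End Pos.

Lemma frob_ts k : frob (ts k) (ts k) = n%:R.
Proof.
rewrite frob_rs (eq_bigr (fun _ => 1)); last by move=> i _; rewrite rs_ts.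
by rewrite sumr_const card_ord.
Qed.

Lemma Lr_lb k : - ((c ^+ 2 + 1) * n%:R) / 2 <= Lr k.
Proof.
rewrite Lr_eq.
have hy := young_frob (C *m ts k) (- ts k) ltr01.
rewrite frobNr frobNl frobNr opprK invr1 !mul1r frob_ts in hy.
have b := frobC_bound (ts k) CT; rewrite frob_ts in b.
have e0 : 0 <= rho / 2 * frob (E k) (E k).
  by rewrite mulr_ge0 ?frob_ge0 // divr_ge0 // rho_ge0.
lra.
Qed.

Lemma ts_bound k i j : `|ts k i j| <= 1.
Proof.
have h := entry_le_rs (ts k) i j; rewrite rs_ts in h.
have hn := normr_ge0 (ts k i j).
have hsq : `|ts k i j| ^+ 2 = ts k i j ^+ 2 := real_normK (num_real _).
rewrite -hsq in h; nra.
Qed.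

Lemma Cmul_cvg (X : nat -> 'M[R]_(n, r)) (Lx : 'M[R]_(n, r)) :
  (forall i j, (fun k => X k i j) @ \oo --> Lx i j) ->
  forall i j, (fun k => (C *m X k) i j) @ \oo --> (C *m Lx) i j.
Proof.
move=> hX i j; rewrite mxE.
have -> : (fun k => (C *m X k) i j) = (fun k => \sum_l (fun l k => C i l * X k l j) l k).
  by apply/funext => k; rewrite mxE.
apply: cvg_sumR => l; apply: cvgM; [exact: cvg_cst | exact: hX].
Qed.

Section Pos2.
Hypothesis rp : 0 < rho.

Lemma Lr_noninc : nonincreasing_seq Lr.
Proof.
apply/nonincreasing_seqP => k; have := descent rp k.
have : 0 <= rho / 30 * frob (D k) (D k) by rewrite mulr_ge0 ?frob_ge0 // divr_ge0 // ltW.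
move=> h1 h2; lra.
Qed.

Lemma Lr_cvg : Lr @ \oo --> limn Lr.
Proof.
apply: nonincreasing_is_cvgn Lr_noninc _.
by exists (- ((c ^+ 2 + 1) * n%:R) / 2) => _ [k _ <-]; exact: Lr_lb.
Qed.

Lemma d_cvg0 : (fun k => frob (D k) (D k)) @ \oo --> 0.
Proof.
have h1 : (fun k => 30 / rho * (Lr k - Lr k.+1)) @ \oo --> 30 / rho * (limn Lr - limn Lr).
  apply: cvgM; first exact: cvg_cst.
  apply: cvgB; first exact: Lr_cvg.
  by rewrite (cvg_shiftS Lr); exact: Lr_cvg.
rewrite subrr mulr0 in h1.
apply: (squeeze_cvgr _ (cvg_cst 0) h1).
near=> k; apply/andP; split; first exact: frob_ge0.
have := descent rp k; move=> h.
have e : frob (D k) (D k) = 30 / rho * (rho / 30 * frob (D k) (D k)).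
  by field; exact: lt0r_neq0.
rewrite e; apply: ler_wpM2l; first by rewrite divr_ge0 // ltW.
lra.
Unshelve. all: by end_near.
Qed.

Lemma e_cvg0 : (fun k => frob (E k) (E k)) @ \oo --> 0.
Proof.
rewrite -(cvg_shiftS (fun k => frob (E k) (E k))) /=.
have h1 : (fun k => 1/100 * frob (D k) (D k)) @ \oo --> (1/100 * 0 : R).
  by apply: cvgM; [exact: cvg_cst | exact: d_cvg0].
rewrite mulr0 in h1.
apply: (squeeze_cvgr _ (cvg_cst 0) h1).
near=> k; apply/andP; split; first exact: frob_ge0.
rewrite E_succ frobZl frobZr mulrA -expr2.
have -> : ts k - ts k.+1 = - D k by rewrite /D opprB.
rewrite mulmxN frobNl frobNr opprK.
have b := frobC_bound (D k) CT.
have k0 := kappa rp.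
have q0 := frob_ge0 (C *m D k).
have d0 := frob_ge0 (D k).
have : rho^-1 ^+ 2 * frob (C *m D k) (C *m D k) <= rho^-1 ^+ 2 * (c ^+ 2 * frob (D k) (D k)).
  by apply: ler_wpM2l => //; rewrite sqr_ge0.
have : rho^-1 ^+ 2 * c ^+ 2 * frob (D k) (D k) <= 1/100 * frob (D k) (D k).
  by apply: ler_wpM2r.
rewrite mulrA; lra.
Unshelve. all: by end_near.
Qed.

Lemma D_entry0 i j : (fun k => D k i j) @ \oo --> 0.
Proof. apply: (sq_cvg0 _ d_cvg0) => k; exact: entry_le_frob. Qed.

Lemma E_entry0 i j : (fun k => E k i j) @ \oo --> 0.
Proof. apply: (sq_cvg0 _ e_cvg0) => k; exact: entry_le_frob. Qed.

Lemma G_ident k i j : G k i j = ip (G k) (ts k.+1) i * ts k.+1 i j.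
Proof.
have e : ip (G k) (ts k.+1) i = N k i.
  rewrite /ip (eq_bigr (fun l => N k i * (ts k.+1 i l * ts k.+1 i l))); last first.
    by move=> l _; rewrite G_ts mulrA.
  by rewrite -mulr_sumr -/(ip _ _ _) -/(rs _ _) rs_ts mulr1.
by rewrite e G_ts.
Qed.

Lemma stat_pos (phi : nat -> nat) (L : 'M[R]_(n, r)) :
  {homo phi : a b / (a < b)%N >-> (a < b)%N} ->
  (ts \o phi) @ \oo --> L ->
  forall i, exists t : R, - row i (C *m L) = t *: row i L.
Proof.
move=> hphi hL i.
have hT : forall i j, (fun k => ts (phi k) i j) @ \oo --> L i j.
  by move=> i' j; exact: (@entry_cvg R n r (ts \o phi) L i' j hL).
have hT1 : forall i j, (fun k => ts (phi k).+1 i j) @ \oo --> L i j.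
  move=> i' j.
  have -> : (fun k => ts (phi k).+1 i' j) = (fun k => ts (phi k) i' j + D (phi k) i' j).
    by apply/funext => k; rewrite /D !mxE; ring.
  rewrite -[L i' j]addr0; apply: cvgD; first exact: hT.
  exact: (subseq_cvg (u := fun k => D k i' j) hphi (D_entry0 i' j)).
have hS : forall i j, (fun k => s (phi k) i j) @ \oo --> L i j.
  move=> i' j.
  have -> : (fun k => s (phi k) i' j) = (fun k => ts (phi k) i' j + E (phi k) i' j).
    by apply/funext => k; rewrite s_eq mxE.
  rewrite -[L i' j]addr0; apply: cvgD; first exact: hT.
  exact: (subseq_cvg (u := fun k => E k i' j) hphi (E_entry0 i' j)).
have hCT := Cmul_cvg hT.
have hCS := Cmul_cvg hS.
set CL := C *m L in hCT hCS *; clearbody CL.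
pose GL := L - rho^-1 *: (CL + CL).
have hG : forall j, (fun k => G (phi k) i j) @ \oo --> GL i j.
  move=> j.
  have -> : (fun k => G (phi k) i j) =
     (fun k => s (phi k) i j - rho^-1 * ((C *m ts (phi k)) i j + (C *m s (phi k)) i j)).
    apply/funext => k; rewrite /G /gammaBM y_eq.
    by move: (C *m ts (phi k)) (C *m s (phi k)) => A B; rewrite !mxE.
  rewrite /GL !mxE.
  apply: cvgB; first exact: hS.
  apply: cvgM; first exact: cvg_cst.
  by apply: cvgD; [exact: hCT | exact: hCS].
have hip : (fun k => ip (G (phi k)) (ts (phi k).+1) i) @ \oo --> ip GL L i.
  rewrite /ip; apply: (cvg_sumR (f := fun l k => G (phi k) i l * ts (phi k).+1 i l)) => l.
  by apply: cvgM; [exact: hG | exact: hT1].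
have key : forall j, GL i j = ip GL L i * L i j.
  move=> j; apply: (lim_eq (u := fun k => G (phi k) i j)
     (v := fun k => ip (G (phi k)) (ts (phi k).+1) i * ts (phi k).+1 i j)).
  - move=> k; exact: G_ident.
  - exact: hG.
  - by apply: cvgM; [exact: hip | exact: hT1].
exists (rho / 2 * (ip GL L i - 1)).
apply/rowP => j; rewrite !mxE.
have hk := key j; rewrite {1}/GL !mxE in hk.
have rn0 : rho != 0 by exact: lt0r_neq0.
set a := ip GL L i in hk *.
have e : CL i j = rho / 2 * (rho^-1 * (CL i j + CL i j)) by field.
rewrite e.
have e2 : rho^-1 * (CL i j + CL i j) = L i j - a * L i j by rewrite -hk; ring.
rewrite e2; ring.
Qed.

End Pos2.

Lemma rho_cases2 : 0 < rho \/ (rho = 0 /\ C = 0).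
Proof.
have := rho_ge0; rewrite le_eqVlt => /orP[/eqP r0|]; last by left.
right; split => //; apply: C0_of_c0; have := rho_c; have := inf_norm_ge0 C; rewrite -r0; lra.
Qed.

Lemma Cz0 (X : 'M[R]_(n, r)) : C = 0 -> C *m X = 0.
Proof. by move=> C0; apply/matrixP => i j; rewrite C0 !mxE big1 // => l _; rewrite mxE mul0r. Qed.

Lemma ts_lim_obl (phi : nat -> nat) (L : 'M[R]_(n, r)) :
  (ts \o phi) @ \oo --> L -> oblique L.
Proof.
move=> hL; apply/oblique_rs => i.
have hT : forall j, (fun k => ts (phi k) i j) @ \oo --> L i j.
  by move=> j; exact: (@entry_cvg R n r (ts \o phi) L i j hL).
have h : (fun k => rs (ts (phi k)) i) @ \oo --> rs L i.
  rewrite /rs /ip; apply: (cvg_sumR (f := fun l k => ts (phi k) i l * ts (phi k) i l)) => l.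
  by apply: cvgM; exact: hT.
have e : (fun k => rs (ts (phi k)) i) = (fun _ => 1).
  by apply/funext => k; rewrite rs_ts.
rewrite e in h.
by rewrite -(cst_lim h).
Qed.

Lemma main_result :
  [/\ exists l : R,
        (fun k : nat => Lrho C rho (ts k.+1) (s k.+1) (y k.+1)) @ \oo --> l%:E,
      (fun k : nat => (Lrho C rho (ts k) (s k) (y k) - (frob (C *m ts k) (ts k))%:E)%E)
        @ \oo --> 0%E,
      exists phi : nat -> nat,
        {homo phi : a b / (a < b)%N >-> (a < b)%N} /\ cvg ((ts \o phi) @ \oo) &
      forall (phi : nat -> nat) (L : 'M[R]_(n, r)),
        {homo phi : a b / (a < b)%N >-> (a < b)%N} ->
        (ts \o phi) @ \oo --> L -> stationary C L].
Proof.
have eL2 : forall k, (Lrho C rho (ts k) (s k) (y k) - (frob (C *m ts k) (ts k))%:E)%E =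
                     (rho / 2 * frob (E k) (E k))%:E.
  by move=> k; rewrite Lrho_eq Lr_eq -EFinB addrC addKr.
split.
- case: rho_cases2 => [rp|[r0 C0]].
    exists (limn Lr).
    have -> : (fun k => Lrho C rho (ts k.+1) (s k.+1) (y k.+1)) = (fun k => (Lr k.+1)%:E).
      by apply/funext => k; rewrite Lrho_eq.
    apply: EFin_cvg; rewrite (cvg_shiftS Lr); exact: Lr_cvg.
  exists 0.
  have -> : (fun k => Lrho C rho (ts k.+1) (s k.+1) (y k.+1)) = (fun k => (0:R)%:E).
    by apply/funext => k; rewrite Lrho_eq Lr_eq Cz0 // frob0l r0 mul0r mul0r addr0.
  exact: cvg_cst.
- rewrite (funext eL2).
  case: rho_cases2 => [rp|[r0 C0]].
    have h : (fun k => rho / 2 * frob (E k) (E k)) @ \oo --> rho / 2 * 0.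
      by apply: cvgM; [exact: cvg_cst | exact: e_cvg0].
    rewrite mulr0 in h; exact: (EFin_cvg h).
  have -> : (fun k => (rho / 2 * frob (E k) (E k))%:E) = (fun k => (0:R)%:E).
    by apply/funext => k; rewrite r0 mul0r mul0r.
  exact: cvg_cst.
- exact: (mx_bw ts_bound).
- move=> phi L hphi hL; split; first exact: (ts_lim_obl hL).
  move=> i; rewrite /sphere_subdiff /=.
  case: rho_cases2 => [rp|[r0 C0]]; first exact: (stat_pos rp hphi hL).
  exists 0; rewrite Cz0 // scale0r; apply/rowP => j; by rewrite !mxE oppr0.
Qed.

End Main.

Unset Implicit Arguments.

Theorem theorem1 (R : realType) (n r : nat) (C : 'M[R]_n) (rho : R)
  (ts s y : nat -> 'M[R]_(n, r)) :
  (0 < n)%N -> (0 < r)%N -> C^T = C ->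
  Num.max (10 * inf_norm C) (2 * spec_norm C) <= rho ->
  admm_bm C rho ts s y ->
  assumptionA C rho s y ->
  [/\ exists l : R,
        (fun k : nat => Lrho C rho (ts k.+1) (s k.+1) (y k.+1)) @ \oo --> l%:E,
      (fun k : nat => (Lrho C rho (ts k) (s k) (y k) - (frob (C *m ts k) (ts k))%:E)%E)
        @ \oo --> 0%E,
      exists phi : nat -> nat,
        {homo phi : a b / (a < b)%N >-> (a < b)%N} /\ cvg ((ts \o phi) @ \oo) &
      forall (phi : nat -> nat) (L : 'M[R]_(n, r)),
        {homo phi : a b / (a < b)%N >-> (a < b)%N} ->
        (ts \o phi) @ \oo --> L -> stationary C L].
Proof. move=> _ _ CT hrho H HA; exact: (main_result CT hrho H HA). Qed.
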